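(* Let $\phi$ be the $2$-spin structure on the closed torus $\Sigma_1$ with $\phi(\alpha)=1$ and $\phi(\beta)=0$, where $\alpha,\beta$ are simple closed curves with $|\alpha\cap\beta|=1$. Set $a=t_\alpha$ and $b=t_\beta$. Then $\operatorname{Mod}(\Sigma_1)[\phi]$ is generated by $a^2$ and $b$, and has the presentation $\langle a^2,b\mid (a^2b)^2=(ba^2)^2,\ (a^2b)^4=1\rangle$.
   Context: A $2$-spin structure on a surface is a map $\phi$ from isotopy classes of oriented simple closed curves to $\mathbb{Z}/2$ with $\phi(t_c(d))=\phi(d)+(d\cdot c)\phi(c)$ ($t_c$ Dehn twist, $d\cdot c$ algebraic intersection) and $\sum\phi(c_i)=\chi(S)\bmod 2$ whenever $c_1,\dots,c_m$ is the oriented boundary of a subsurface $S$; it is determined by its values on a homology basis. $\operatorname{Mod}(\Sigma_1)$ acts by $(f\cdot\phi)(c)=\phi(f^{-1}(c))$ and $\operatorname{Mod}(\Sigma_1)[\phi]$ is the stabilizer of $\phi$. The claimed presentation means that the abstract group with generators $x,y$ and relations $(xy)^2=(yx)^2$, $(xy)^4=1$ is isomorphic to $\operatorname{Mod}(\Sigma_1)[\phi]$ via $x\mapsto t_\alpha^2$, $y\mapsto t_\beta$. *)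

(* Defs.v *)
(* Homological model of the torus Sigma_1:
   Mod(Sigma_1) = SL(2,Z) acting on H_1(Sigma_1;Z) = Z^2, with
   alpha = (1,0), beta = (0,1), algebraic intersection alpha.beta = 1.
   Isotopy classes of oriented essential simple closed curves = primitive
   vectors of Z^2. *)
From mathcomp Require Import all_boot all_algebra.
Set Implicit Arguments. Unset Strict Implicit. Unset Printing Implicit Defensive.
Import GRing.Theory Num.Theory.
Local Open Scope ring_scope.

Definition vec := (int * int)%type.

Definition primitive (c : vec) : bool := coprimez c.1 c.2.

(* algebraic intersection number c . d *)
Definition dot (c d : vec) : int := c.1 * d.2 - c.2 * d.1.

Definition alpha : vec := (1, 0).
Definition beta : vec := (0, 1).

Definition i0 : 'I_2 := ord0.
Definition i1 : 'I_2 := @Ordinal 2 1 isT.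

Definition act (A : 'M[int]_2) (v : vec) : vec :=
  (A i0 i0 * v.1 + A i0 i1 * v.2, A i1 i0 * v.1 + A i1 i1 * v.2).

Definition SL2Z (A : 'M[int]_2) : Prop := \det A = 1.

(* Dehn twist about c, acting on homology: d |-> d + (c . d) c *)
Definition twist_vec (c d : vec) : vec :=
  (d.1 + dot c d * c.1, d.2 + dot c d * c.2).
Definition twist (c : vec) : 'M[int]_2 :=
  \matrix_(i < 2, j < 2)
    ((i == j)%:R + (if i == i0 then c.1 else c.2) *
                   (if j == i0 then - c.2 else c.1)).

(* a 2-spin structure (values in Z/2) on the essential curves of the torus:
   twist formula, and the boundary condition for the only subsurfaces
   whose boundary consists of essential curves (annuli, chi = 0). *)
Definition is_2spin (phi : vec -> 'Z_2) : Prop :=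
  (forall c d, primitive c -> primitive d ->
     phi (twist_vec c d) = phi d + (dot d c)%:~R * phi c) /\
  (forall c, primitive c -> phi c + phi (- c.1, - c.2) = 0).

Definition in_stab (phi : vec -> 'Z_2) (A : 'M[int]_2) : Prop :=
  SL2Z A /\ forall c, primitive c -> phi (act (invmx A) c) = phi c.

Definition ta : 'M[int]_2 := twist alpha.
Definition tb : 'M[int]_2 := twist beta.

(* words in the abstract generators x, y: a letter (g, e) is
   x (g = false) or y (g = true), inverted iff e = true *)
Definition letter := (bool * bool)%type.
Definition X : letter := (false, false).
Definition Xi : letter := (false, true).
Definition Y : letter := (true, false).
Definition Yi : letter := (true, true).

Definition rel1 : seq letter := [:: X; Y; X; Y; Xi; Yi; Xi; Yi].
Definition rel2 : seq letter := [:: X; Y; X; Y; X; Y; X; Y].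

Definition null_words : seq (seq letter) :=
  [:: [:: X; Xi]; [:: Xi; X]; [:: Y; Yi]; [:: Yi; Y]; rel1; rel2].

Inductive pstep : seq letter -> seq letter -> Prop :=
| PStep u v r : r \in null_words -> pstep (u ++ r ++ v) (u ++ v).

(* equality in the presented group < x, y | (xy)^2=(yx)^2, (xy)^4=1 >:
   the equivalence relation generated by pstep *)
Inductive pres_equiv : seq letter -> seq letter -> Prop :=
| PE_step w1 w2 : pstep w1 w2 -> pres_equiv w1 w2
| PE_refl w : pres_equiv w w
| PE_sym w1 w2 : pres_equiv w1 w2 -> pres_equiv w2 w1
| PE_trans w1 w2 w3 : pres_equiv w1 w2 -> pres_equiv w2 w3 -> pres_equiv w1 w3.

Definition letter_mx (l : letter) : 'M[int]_2 :=
  let M := if l.1 then tb else ta ^+ 2 in if l.2 then invmx M else M.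
Definition evalw (w : seq letter) : 'M[int]_2 :=
  foldr (fun l M => letter_mx l * M) 1 w.

(* Main.v *)
Require Import Defs.
From mathcomp Require Import all_boot all_algebra zify ring.
From Stdlib Require Import Setoid Morphisms.
Import GRing.Theory Num.Theory.
Local Open Scope ring_scope.

Lemma det2 (A : 'M[int]_2) : \det A = A i0 i0 * A i1 i1 - A i0 i1 * A i1 i0.
Proof.
rewrite (expand_det_row _ i0) !big_ord_recl big_ord0 /cofactor !det_mx11 !mxE /=.
rewrite addr0 expr0 expr1 !mul1r.
have e1 : lift i0 0 = i1 by apply/val_inj.
have e2 : lift ord0 (0 : 'I_1) = i1 by apply/val_inj.
have e3 : lift ord0 (ord0 : 'I_1) = i1 by apply/val_inj.
have e4 : lift i1 (0 : 'I_1) = i0 by apply/val_inj.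
rewrite ?e1 ?e2 ?e3 ?e4.
by rewrite mulN1r mulrN.
Qed.

Definition mk (a b c d : int) : 'M[int]_2 :=
  \matrix_(i < 2, j < 2) if i == i0 then (if j == i0 then a else b) else (if j == i0 then c else d).

Lemma ord2P (P : 'I_2 -> Prop) : P i0 -> P i1 -> forall i, P i.
Proof.
move=> H0 H1 [[|[|//]] Hi].
- have e : Ordinal Hi = i0 by apply/val_inj. by rewrite e.
- have e : Ordinal Hi = i1 by apply/val_inj. by rewrite e.
Qed.

Lemma mkE (A : 'M[int]_2) : A = mk (A i0 i0) (A i0 i1) (A i1 i0) (A i1 i1).
Proof. by apply/matrixP; elim/ord2P => //; elim/ord2P => //; rewrite mxE. Qed.

Lemma mk_entries a b c d :
  [/\ mk a b c d i0 i0 = a, mk a b c d i0 i1 = b, mk a b c d i1 i0 = c & mk a b c d i1 i1 = d].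
Proof. by rewrite !mxE. Qed.

Lemma mul2E (A B : 'M[int]_2) i j : (A * B) i j = A i i0 * B i0 j + A i i1 * B i1 j.
Proof. rewrite -mulmxE mxE !big_ord_recl big_ord0 addr0.
have e : lift ord0 ord0 = i1 :> 'I_2 by apply/val_inj. by rewrite e. Qed.

Lemma mk_mul a b c d a' b' c' d' :
  mk a b c d * mk a' b' c' d' =
  mk (a * a' + b * c') (a * b' + b * d') (c * a' + d * c') (c * b' + d * d').
Proof. by apply/matrixP; elim/ord2P; elim/ord2P; rewrite mul2E !mxE. Qed.

Lemma mk1 : (1 : 'M[int]_2) = mk 1 0 0 1.
Proof. by apply/matrixP; elim/ord2P; elim/ord2P; rewrite !mxE. Qed.

Lemma det_mk a b c d : \det (mk a b c d) = a * d - b * c.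
Proof. by rewrite det2 !mxE. Qed.

Lemma mk_inj a b c d a' b' c' d' : mk a b c d = mk a' b' c' d' ->
  [/\ a = a', b = b', c = c' & d = d'].
Proof.
move=> H; have := congr1 (fun M : 'M[int]_2 => (M i0 i0, M i0 i1, M i1 i0, M i1 i1)) H.
by rewrite /= !mxE /= => -[-> -> -> ->].
Qed.

Lemma invmx_mk a b c d : a * d - b * c = 1 -> invmx (mk a b c d) = mk d (-b) (-c) a.
Proof.
move=> h.
have e : mk a b c d *m mk d (-b) (-c) a = 1%:M.
  rewrite mulmxE mk_mul idmxE mk1; congr mk; lia.
have [u _] := mulmx1_unit e.
by rewrite -[invmx _]mulmx1 -e mulKmx.
Qed.

Lemma act_mk a b c d v : act (mk a b c d) v = (a * v.1 + b * v.2, c * v.1 + d * v.2).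
Proof. by rewrite /act !mxE. Qed.

Definition colv (M : 'M[int]_2) : vec := (M i0 i0, M i1 i0).
Lemma colv_mul A B : colv (A * B) = act A (colv B).
Proof. by rewrite /colv /act !mul2E. Qed.

Lemma ta2E : ta ^+ 2 = mk 1 2 0 1.
Proof.
have -> : ta = mk 1 1 0 1 by apply/matrixP; elim/ord2P; elim/ord2P; rewrite !mxE.
by rewrite expr2 mk_mul.
Qed.
Lemma tbE : tb = mk 1 0 (-1) 1.
Proof. by apply/matrixP; elim/ord2P; elim/ord2P; rewrite !mxE. Qed.
Notation "u ~~ v" := (pres_equiv u v) (at level 70).

#[local] Instance pe_equiv : Equivalence pres_equiv.
Proof. split; [exact: PE_refl | exact: PE_sym | exact: PE_trans]. Qed.

Lemma pe_ctx p s u v : u ~~ v -> (p ++ u ++ s) ~~ (p ++ v ++ s).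
Proof.
elim=> [w1 w2 [u0 v0 r Hr]| w | w1 w2 _ IH | w1 w2 w3 _ IH1 _ IH2].
- apply: PE_step; rewrite !catA -(catA p u0) -!catA.
  have := PStep (p ++ u0) (v0 ++ s) Hr; by rewrite !catA -!catA.
- reflexivity.
- by symmetry.
- by rewrite IH1.
Qed.

#[local] Instance cat_proper : Proper (pres_equiv ==> pres_equiv ==> pres_equiv) (@cat letter).
Proof.
move=> u u' Hu v v' Hv.
have h1 := @pe_ctx [::] v _ _ Hu; have h2 := @pe_ctx u' [::] _ _ Hv.
rewrite /= !cats0 in h1 h2; exact: PE_trans h1 h2.
Qed.

#[local] Instance cons_proper : Proper (eq ==> pres_equiv ==> pres_equiv) (@cons letter).
Proof. move=> l l' <- v v' Hv; have := @pe_ctx [:: l] [::] _ _ Hv; by rewrite !cats0. Qed.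

Lemma pe_null r s : r \in null_words -> (r ++ s) ~~ s.
Proof. move=> H; exact: (PE_step (PStep [::] s H)). Qed.

Lemma c_XXi s : (X :: Xi :: s) ~~ s. Proof. exact: (@pe_null [:: X; Xi]). Qed.
Lemma c_XiX s : (Xi :: X :: s) ~~ s. Proof. exact: (@pe_null [:: Xi; X]). Qed.
Lemma c_YYi s : (Y :: Yi :: s) ~~ s. Proof. exact: (@pe_null [:: Y; Yi]). Qed.
Lemma c_YiY s : (Yi :: Y :: s) ~~ s. Proof. exact: (@pe_null [:: Yi; Y]). Qed.
Lemma c_rel1 s : (rel1 ++ s) ~~ s. Proof. exact: pe_null. Qed.
Lemma c_rel2 s : (rel2 ++ s) ~~ s. Proof. exact: pe_null. Qed.

Definition zw : seq letter := [:: X; Y].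
Definition zsq : seq letter := [:: X; Y; X; Y].

Lemma zsq_swap : zsq ~~ [:: Y; X; Y; X].
Proof.
transitivity (rel1 ++ [:: Y; X; Y; X]); last exact: c_rel1.
rewrite /=. setoid_rewrite c_YiY. setoid_rewrite c_XiX.
setoid_rewrite c_YiY. setoid_rewrite c_XiX. reflexivity.
Qed.

Lemma zsqX : (X :: zsq) ~~ (zsq ++ [:: X]).
Proof. rewrite /=. setoid_rewrite zsq_swap at 1. reflexivity. Qed.
Lemma zsqY : (Y :: zsq) ~~ (zsq ++ [:: Y]).
Proof. change (([:: Y; X; Y; X] ++ [:: Y]) ~~ (zsq ++ [:: Y])). setoid_rewrite <- zsq_swap. reflexivity. Qed.

Lemma zsq_inv l l' : (l :: zsq) ~~ (zsq ++ [:: l]) ->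
  (forall s, (l :: l' :: s) ~~ s) -> (forall s, (l' :: l :: s) ~~ s) ->
  (l' :: zsq) ~~ (zsq ++ [:: l']).
Proof.
move=> H c1 c2.
transitivity (l' :: l :: zsq ++ [:: l']); last exact: c2.
have -> : l' :: l :: zsq ++ [:: l'] = [:: l'] ++ (l :: zsq) ++ [:: l'] by [].
setoid_rewrite H. rewrite /=. setoid_rewrite c1. reflexivity.
Qed.

Lemma zsq_letter l : (l :: zsq) ~~ (zsq ++ [:: l]).
Proof.
case: l => [[] []].
- exact: (@zsq_inv Y Yi zsqY c_YYi c_YiY).
- exact: zsqY.
- exact: (@zsq_inv X Xi zsqX c_XXi c_XiX).
- exact: zsqX.
Qed.

Lemma zsq_comm w : (zsq ++ w) ~~ (w ++ zsq).
Proof.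
elim: w => [|l w IH]; first by rewrite cats0; reflexivity.
have -> : zsq ++ l :: w = (zsq ++ [:: l]) ++ w by rewrite -catA.
setoid_rewrite <- zsq_letter. change (l :: (zsq ++ w) ~~ l :: (w ++ zsq)). setoid_rewrite IH. reflexivity.
Qed.

Lemma zsq_zsq s : (zsq ++ zsq ++ s) ~~ s.
Proof. rewrite catA; exact: c_rel2. Qed.

Definition xpow (n : int) : seq letter :=
  match n with Posz m => nseq m X | Negz m => nseq m.+1 Xi end.
Fixpoint tailw (r : seq int) : seq letter :=
  match r with [::] => [::] | n :: r' => zw ++ xpow n ++ tailw r' end.
Definition zz (e : bool) : seq letter := if e then zsq else [::].
Definition nf := (bool * int * seq int)%type.
Definition nfw (n : nf) : seq letter := zz n.1.1 ++ xpow n.1.2 ++ tailw n.2.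
Definition nf0 : nf := (false, 0, [::]).

Definition mul_x (n : nf) : nf := (n.1.1, n.1.2 + 1, n.2).
Definition mul_xi (n : nf) : nf := (n.1.1, n.1.2 - 1, n.2).
Definition mul_z (n : nf) : nf :=
  let: (e, n0, r) := n in
  match r with
  | n1 :: r' => if n0 == 0 then (~~ e, n1, r') else (e, 0, n0 :: r)
  | [::] => (e, 0, [:: n0])
  end.
Definition mulg (l : letter) (n : nf) : nf :=
  match l with
  | (false, false) => mul_x n
  | (false, true) => mul_xi n
  | (true, false) => mul_xi (mul_z n)
  | (true, true) => mul_z (mul_z (mul_z (mul_x n)))
  end.
Definition norm (w : seq letter) : nf := foldr mulg nf0 w.

Lemma xpowS n : (X :: xpow n) ~~ xpow (n + 1).
Proof.
case: n => m.
- have -> : (Posz m + 1 = Posz m.+1) by lia. reflexivity.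
- case: m => [|k].
  + have -> : (Negz 0 + 1 = 0) by lia. exact: c_XXi.
  + have -> : (Negz k.+1 + 1 = Negz k) by lia. exact: c_XXi.
Qed.

Lemma xpowP n : (Xi :: xpow n) ~~ xpow (n - 1).
Proof.
case: n => m.
- case: m => [|k].
  + have -> : (Posz 0 - 1 = Negz 0) by lia. reflexivity.
  + have -> : (Posz k.+1 - 1 = Posz k) by lia. exact: c_XiX.
- have -> : (Negz m - 1 = Negz m.+1) by lia. reflexivity.
Qed.

Lemma zz_cat e W Z : (W ++ zz e ++ Z) ~~ (zz e ++ W ++ Z).
Proof.
case: e; rewrite /zz; last reflexivity.
rewrite !catA. apply: cat_proper; last reflexivity.
symmetry; exact: zsq_comm.
Qed.

Lemma mul_x_ok n : (X :: nfw n) ~~ nfw (mul_x n).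
Proof.
case: n => [[e n0] r]; rewrite /nfw /mul_x /=.
have -> : X :: zz e ++ xpow n0 ++ tailw r = [:: X] ++ zz e ++ xpow n0 ++ tailw r by [].
setoid_rewrite zz_cat. apply: cat_proper; first reflexivity.
change ((X :: xpow n0) ++ tailw r ~~ xpow (n0 + 1) ++ tailw r).
apply: cat_proper; [exact: xpowS | reflexivity].
Qed.

Lemma mul_xi_ok n : (Xi :: nfw n) ~~ nfw (mul_xi n).
Proof.
case: n => [[e n0] r]; rewrite /nfw /mul_xi /=.
have -> : Xi :: zz e ++ xpow n0 ++ tailw r = [:: Xi] ++ zz e ++ xpow n0 ++ tailw r by [].
setoid_rewrite zz_cat. apply: cat_proper; first reflexivity.
change ((Xi :: xpow n0) ++ tailw r ~~ xpow (n0 - 1) ++ tailw r).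
apply: cat_proper; [exact: xpowP | reflexivity].
Qed.

Lemma mul_z_ok n : (zw ++ nfw n) ~~ nfw (mul_z n).
Proof.
case: n => [[e n0] r].
change (zw ++ zz e ++ xpow n0 ++ tailw r ~~ nfw (mul_z (e, n0, r))).
setoid_rewrite zz_cat.
case: r => [|n1 r] /=.
- rewrite /nfw /= cats0; reflexivity.
- case: (n0 =P 0) => [->|_] /=; last reflexivity.
  case: e => /=.
  + change (zsq ++ zsq ++ xpow n1 ++ tailw r ~~ xpow n1 ++ tailw r).
    exact: zsq_zsq.
  + reflexivity.
Qed.

Lemma mulg_ok l n : (l :: nfw n) ~~ nfw (mulg l n).
Proof.
case: l => [[] []] /=.
- transitivity (zw ++ zw ++ zw ++ X :: nfw n).
  + transitivity (rel2 ++ Yi :: nfw n); first by symmetry; exact: c_rel2.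
    rewrite /=. setoid_rewrite c_YYi. reflexivity.
  + setoid_rewrite mul_x_ok. setoid_rewrite mul_z_ok. setoid_rewrite mul_z_ok.
    exact: mul_z_ok.
- transitivity (Xi :: zw ++ nfw n).
  + rewrite /=. setoid_rewrite c_XiX. reflexivity.
  + setoid_rewrite mul_z_ok. exact: mul_xi_ok.
- exact: mul_xi_ok.
- exact: mul_x_ok.
Qed.

Lemma norm_ok w : w ~~ nfw (norm w).
Proof.
elim: w => [|l w IH] /=; first reflexivity.
setoid_rewrite IH at 1. exact: mulg_ok.
Qed.

Fixpoint validr (r : seq int) : bool :=
  match r with n :: ((_ :: _) as r') => (n != 0) && validr r' | _ => true end.

Lemma valid_mul_z n : validr n.2 -> validr (mul_z n).2.
Proof.
case: n => [[e n0] r] /=; case: r => [|n1 r] //=.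
case: (n0 =P 0) => [_|/eqP nz] /=.
- by case: r => //= m r /andP[].
- by move=> h; apply/andP.
Qed.

Lemma valid_norm w : validr (norm w).2.
Proof.
elim: w => [|l w IH] //=.
case: l => [[] []]; rewrite [mulg _ _]/mulg. 1: by do 3!apply: valid_mul_z. 1: exact: valid_mul_z IH. all: exact: IH. Qed.

Lemma evalw_cat u v : evalw (u ++ v) = evalw u * evalw v.
Proof. elim: u => [|l u IH] /=; first by rewrite mul1r. by rewrite IH mulrA. Qed.

Lemma invS : invmx (ta ^+ 2) = mk 1 (-2) 0 1.
Proof. by rewrite ta2E invmx_mk. Qed.
Lemma invT : invmx tb = mk 1 0 1 1.
Proof. by rewrite tbE invmx_mk // oppr0 opprK. Qed.

Lemma lmX : letter_mx X = mk 1 2 0 1. Proof. exact: ta2E. Qed.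
Lemma lmXi : letter_mx Xi = mk 1 (-2) 0 1. Proof. exact: invS. Qed.
Lemma lmY : letter_mx Y = mk 1 0 (-1) 1. Proof. exact: tbE. Qed.
Lemma lmYi : letter_mx Yi = mk 1 0 1 1. Proof. exact: invT. Qed.

Definition Tm := mk (-1) 2 (-1) 1.
Definition Sm (n : int) := mk 1 (2 * n) 0 1.

Lemma evalw_zw : evalw zw = Tm.
Proof. by rewrite /= lmX lmY mk1 !mk_mul. Qed.
Lemma evalw_zsq : evalw zsq = mk (-1) 0 0 (-1).
Proof. by rewrite /= lmX lmY mk1 !mk_mul. Qed.

Lemma evalw_xpow n : evalw (xpow n) = Sm n.
Proof.
rewrite /Sm; case: n => m /=.
- elim: m => [|m IH] /=; first by rewrite mk1.
  rewrite IH lmX mk_mul. congr mk; lia.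
- elim: m => [|m IH] /=; first by rewrite lmXi mk1 mk_mul.
  rewrite IH lmXi mk_mul. congr mk; lia.
Qed.

Lemma null_eval r : r \in null_words -> evalw r = 1.
Proof.
rewrite /null_words !inE.
by move=> /orP[/eqP->|/orP[/eqP->|/orP[/eqP->|/orP[/eqP->|/orP[/eqP->|/eqP->]]]]];
  rewrite /= ?lmX ?lmXi ?lmY ?lmYi mk1 !mk_mul.
Qed.

Lemma sound w1 w2 : w1 ~~ w2 -> evalw w1 = evalw w2.
Proof.
elim=> [w w' [u v r Hr]| w | w w' _ IH | w w' w'' _ IH1 _ IH2].
- by rewrite !evalw_cat (null_eval r Hr) mul1r.
- by [].
- by rewrite IH.
- by rewrite IH1.
Qed.

Definition Bv (v : vec) : Prop := 0 < v.1 * v.2 /\ v.1 * v.2 < 2 * (v.2 * v.2).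
Definition Av (v : vec) : Prop := v.2 <> 0 /\ (v.1 * v.2 < 0 \/ 2 * (v.2 * v.2) < v.1 * v.2).

Lemma SA n v : n != 0 -> Bv v -> Av (act (Sm n) v).
Proof.
case: v => p q; rewrite /Sm act_mk /Av /Bv /= => /eqP nz [h1 h2].
have hq : q <> 0 by move=> e; rewrite e mulr0 in h1.
have hqq : 0 < q * q by nia.
split; first lia.
have [hn|hn] : 1 <= n \/ n <= -1 by lia.
- right. have : q * q <= n * (q * q) by nia. nia.
- left. have : n * (q * q) <= - (q * q) by nia. nia.
Qed.

Lemma TB v : Av v -> Bv (act Tm v).
Proof.
case: v => p q; rewrite /Tm act_mk /Av /Bv /= => -[hq [h|h]].
- have hqq : 0 < q * q by nia.
  have hpp : 0 < p * p by nia.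
  split; nia.
- set u := p - 2 * q.
  have hu : 0 < u * q by rewrite /u; nia.
  have -> : p = u + 2 * q by rewrite /u; lia.
  split; nia.
Qed.

Lemma evalw_tailw_cons n r : evalw (tailw (n :: r)) = Tm * (Sm n * evalw (tailw r)).
Proof.
change (evalw (zw ++ xpow n ++ tailw r) = Tm * (Sm n * evalw (tailw r))).
by rewrite evalw_cat evalw_cat evalw_zw evalw_xpow.
Qed.

Lemma colB n r : validr (n :: r) -> Bv (colv (evalw (tailw (n :: r)))).
Proof.
elim: r n => [|m r IH] n.
- move=> _; change (Bv (colv (evalw (zw ++ xpow n ++ [::])))).
  rewrite !evalw_cat evalw_zw evalw_xpow /= mulr1 /Tm /Sm mk_mul /colv !mxE /Bv /=.
  split; lia.
- move=> /andP[nz hv].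
  have hE := IH m hv.
  rewrite evalw_tailw_cons colv_mul colv_mul.
  apply: TB; apply: SA nz _; exact: hE.
Qed.

Lemma evalw_zz e : evalw (zz e) = mk (if e then -1 else 1) 0 0 (if e then -1 else 1).
Proof. by case: e; rewrite ?evalw_zsq //= mk1. Qed.

Lemma nf_inj n : validr n.2 -> evalw (nfw n) = 1 -> n = nf0.
Proof.
case: n => [[e n0] r] /= hv.
rewrite /nfw /= !evalw_cat evalw_zz evalw_xpow.
case: r hv => [|n1 r] hv.
- rewrite /= mulr1 /Sm mk_mul mk1 => /mk_inj [h1 h2 _ _].
  case: e h1 h2 => /= h1 h2; first lia.
  have -> : n0 = 0 by lia. by [].
- move=> h.
  have := colB n1 r hv; have := congr1 colv h; rewrite colv_mul colv_mul.
  case: (colv (evalw (tailw (n1 :: r)))) => p q.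
  rewrite /Sm !act_mk /colv !mxE /Bv /= => -[_ hq] [h1 _].
  clear h; case: e hq => /= hq; nia.
Qed.

Lemma faithful w : evalw w = 1 <-> w ~~ [::].
Proof.
split.
- move=> h. have hn := norm_ok w.
  have e := sound _ _ hn. rewrite h in e.
  have := nf_inj _ (valid_norm w) (esym e). move=> en.
  rewrite en in hn. exact: hn.
- by move/(sound _ _).
Qed.

Lemma z2_add (x : 'Z_2) : x + x = 0.
Proof. by case: x => [[|[|//]] ?]; apply/val_inj. Qed.
Lemma z2_opp (x : 'Z_2) : - x = x.
Proof. by apply/eqP; rewrite -subr_eq0 -opprD z2_add oppr0. Qed.
Lemma z2_two : (2%:~R : 'Z_2) = 0.
Proof. by apply/val_inj. Qed.
Lemma z2_eq (p p' k : int) : p = p' + 2 * k -> (p%:~R : 'Z_2) = p'%:~R.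
Proof. by move=> ->; rewrite intrD intrM z2_two mul0r addr0. Qed.

Lemma z2_even (b : int) : (b%:~R : 'Z_2) = 0 -> exists k, b = 2 * k.
Proof.
move=> h; exists (b %/ 2)%Z.
have e := divz_eq b 2.
have h0 : (0 <= b %% 2)%Z by rewrite modz_ge0.
have h1 : (b %% 2 < 2)%Z by rewrite ltz_pmod.
have [e0|e1] : (b %% 2)%Z = 0 \/ (b %% 2)%Z = 1 by lia.
- rewrite {1}e e0 addr0; lia.
- exfalso. move: h. rewrite (@z2_eq b 1 (b %/ 2)%Z); last by rewrite {1}e e1; lia.
  by move/eqP; rewrite oner_eq0.
Qed.

Lemma primP (p q : int) : primitive (p, q) -> exists u v, u * p + v * q = 1.
Proof. by move/coprimezP => [[u v] /= h]; exists u, v. Qed.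
Lemma primI (p q u v : int) : u * p + v * q = 1 -> primitive (p, q).
Proof. by move=> h; apply/coprimezP; exists (u, v). Qed.

Lemma unit_int (u p : int) : u * p = 1 -> p = 1 \/ p = -1.
Proof.
move=> h.
have : (u <= -1) \/ (u = 0) \/ (1 <= u) by lia.
case=> [hu|[hu|hu]].
- have : p <= -2 \/ (-1 <= p <= 1) \/ 2 <= p by lia.
  case=> [hp|[hp|hp]]; nia.
- by rewrite hu mul0r in h.
- have : p <= -2 \/ (-1 <= p <= 1) \/ 2 <= p by lia.
  case=> [hp|[hp|hp]]; nia.
Qed.

Arguments primP {p q}.
Arguments primI {p q}.

Section Phi.
Variable phi : vec -> 'Z_2.
Hypothesis Hs : is_2spin phi.
Hypothesis ha : phi alpha = 1.
Hypothesis hb : phi beta = 0.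

Lemma phi_neg p q : primitive (p, q) -> phi (- p, - q) = phi (p, q).
Proof.
move=> hp; have := (proj2 Hs) (p, q) hp => /= /eqP.
by rewrite addr_eq0 z2_opp => /eqP.
Qed.

Lemma phi_tA p q : primitive (p, q) -> phi (p + q, q) = phi (p, q) + q%:~R.
Proof.
move=> hp; have := (proj1 Hs) alpha (p, q) isT hp.
have -> : twist_vec alpha (p, q) = (p + q, q).
  rewrite /twist_vec /dot /=; congr pair; lia.
move=> ->; rewrite ha mulr1 /dot /= mulr0 mulr1 sub0r intrN z2_opp //.
Qed.

Arguments phi_tA {p q}.

Lemma phi_tB p q : primitive (p, q) -> phi (p, q - p) = phi (p, q).
Proof.
move=> hp; have := (proj1 Hs) beta (p, q) isT hp.
have -> : twist_vec beta (p, q) = (p, q - p).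
  rewrite /twist_vec /dot /=; congr pair; lia.
by move=> ->; rewrite hb mulr0 addr0.
Qed.

Arguments phi_tB {p q}.

Lemma phi_val_N N : forall p q : int, (absz p + absz q <= N)%N -> primitive (p, q) ->
  phi (p, q) = p%:~R.
Proof.
elim: N => [|N IH] p q hN hp.
- have [p0 q0] : p = 0 /\ q = 0 by lia. by move: hp; rewrite p0 q0.
- have [u [v huv]] := primP hp.
  have [q0|qn] := eqVneq q 0.
  + rewrite q0 in huv hp *.
    have hup : u * p = 1 by lia.
    case: (unit_int _ _ hup) => ->.
    * exact: ha.
    * have -> : ((-1 : int), (0 : int)) = (- 1, - 0) by rewrite oppr0.
      rewrite phi_neg // ha intrN z2_opp //.
  have [p0|pn] := eqVneq p 0.
  + rewrite p0 in huv hp *.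
    have hup : v * q = 1 by lia.
    case: (unit_int _ _ hup) => ->.
    * exact: hb.
    * have -> : ((0 : int), (-1 : int)) = (- 0, - 1) by rewrite oppr0.
      by rewrite phi_neg // hb.
  have [le|lt] := leqP (absz q) (absz p).
  + have [h|h] : (absz (p - q)%R < absz p)%N \/ (absz (p + q)%R < absz p)%N by lia.
    * have hp' : primitive (p - q, q) by apply: (@primI _ _ u (u + v)); lia.
      have := phi_tA hp'. have -> : p - q + q = p by lia.
      move=> ->; rewrite (IH _ _ _ hp'); last by lia.
      rewrite -intrD; congr intmul; lia.
    * have hp' : primitive (p + q, q) by apply: (@primI _ _ u (v - u)); lia.
      have := phi_tA hp. rewrite (IH _ _ _ hp'); last by lia.
      move/eqP; rewrite -subr_eq => /eqP <-.
      rewrite -intrB; congr intmul; lia.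
  + have [h|h] : (absz (q - p)%R < absz q)%N \/ (absz (q + p)%R < absz q)%N by lia.
    * have hp' : primitive (p, q - p) by apply: (@primI _ _ (u + v) v); lia.
      rewrite -phi_tB // (IH _ _ _ hp') //; lia.
    * have hp' : primitive (p, q + p) by apply: (@primI _ _ (u - v) v); lia.
      have := phi_tB hp'. have -> : q + p - p = q by lia.
      move=> ->; rewrite (IH _ _ _ hp') //; lia.
Qed.

Lemma phi_val p q : primitive (p, q) -> phi (p, q) = p%:~R.
Proof. by move=> hp; apply: (@phi_val_N (absz p + absz q)). Qed.

End Phi.

Lemma gen_words_N N : forall a b c d : int, (absz a + absz c <= N)%N ->
  a * d - b * c = 1 -> (exists k, b = 2 * k) -> exists w, evalw w = mk a b c d.
Proof.
elim: N => [|N IH] a b c d hN hdet [k hk].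
- have [a0 c0] : a = 0 /\ c = 0 by lia. exfalso. rewrite a0 c0 in hdet. lia.
- have [c0|cn] := eqVneq c 0.
  + have hu : a * d = 1 by rewrite c0 in hdet; lia.
    case: (unit_int _ _ hu) => hd.
    * have ha : a = 1 by rewrite hd in hu; lia.
      exists (xpow k); rewrite evalw_xpow /Sm ha hd c0 hk; by [].
    * have ha : a = -1 by rewrite hd in hu; lia.
      exists (zsq ++ xpow (- k)); rewrite evalw_cat evalw_zsq evalw_xpow /Sm mk_mul ha hd c0 hk.
      congr mk; lia.
  have an : a != 0.
    apply/eqP=> a0; rewrite a0 hk in hdet; lia.
  have [lt|le] := ltnP (absz c) (absz a).
  + have : (absz (a - 2 * c)%R < absz a)%N \/ (absz (a + 2 * c)%R < absz a)%N by lia.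
    case=> h.
    * have [|||w hw] := IH (a - 2 * c) (b - 2 * d) c d; [lia | nia | by exists ((k - d)); lia | ].
      exists (X :: w); rewrite /= hw lmX mk_mul; congr mk; lia.
    * have [|||w hw] := IH (a + 2 * c) (b + 2 * d) c d; [lia | nia | by exists ((k + d)); lia | ].
      exists (Xi :: w); rewrite /= hw lmXi mk_mul; congr mk; lia.
  + have : (absz (c - a)%R < absz c)%N \/ (absz (c + a)%R < absz c)%N by lia.
    case=> h.
    * have [w hw] := IH a b (c - a) (d - b) ltac:(lia) ltac:(nia) (ex_intro _ k hk).
      exists (Yi :: w); rewrite /= hw lmYi mk_mul; congr mk; lia.
    * have [w hw] := IH a b (c + a) (d + b) ltac:(lia) ltac:(nia) (ex_intro _ k hk).
      exists (Y :: w); rewrite /= hw lmY mk_mul; congr mk; lia.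
Qed.

Theorem mainTheorem10 (phi : vec -> 'Z_2) :
  is_2spin phi -> phi alpha = 1 -> phi beta = 0 ->
  [/\ in_stab phi (ta ^+ 2), in_stab phi tb,
      (forall A, in_stab phi A -> exists w, evalw w = A) &
      (forall w, evalw w = 1 <-> pres_equiv w [::])].
Proof.
move=> Hs ha hb; split.
- split; first by rewrite /SL2Z ta2E det_mk.
  case=> p q hp; rewrite invS act_mk /=.
  have [u [v huv]] := primP hp.
  have hp' : primitive (1 * p + -2 * q, 0 * p + 1 * q) by apply: (@primI _ _ u (2 * u + v)); lia.
  rewrite !(phi_val _ Hs ha hb) //; apply: (@z2_eq _ _ (- q)); lia.
- split; first by rewrite /SL2Z tbE det_mk.
  case=> p q hp; rewrite invT act_mk /=.
  have [u [v huv]] := primP hp.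
  have hp' : primitive (1 * p + 0 * q, 1 * p + 1 * q) by apply: (@primI _ _ (u - v) v); lia.
  rewrite !(phi_val _ Hs ha hb) //; apply: (@z2_eq _ _ 0); lia.
- move=> A [hdet hinv].
  rewrite (mkE A) in hdet hinv *.
  move: (A i0 i0) (A i0 i1) (A i1 i0) (A i1 i1) hdet hinv => a b c d.
  rewrite /SL2Z det_mk => hdet hinv.
  have := hinv beta isT.
  rewrite invmx_mk // act_mk /= hb.
  have hp' : primitive (d * 0 + - b * 1, - c * 0 + a * 1) by apply: (@primI _ _ c d); lia.
  rewrite (phi_val _ Hs ha hb) // => /z2_even [k hk].
  apply: (@gen_words_N (absz a + absz c)) => //; exists (- k); lia.
- exact: faithful.
Qed.
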